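(* For every $k\ge2$, the Natarajan dimension of the function class $\mathcal G_k$ (viewed as functions from $\Delta_k$ to the label set $\{e_1,\dots,e_k\}\cong[k]$) equals $k-1$.
   Context: $\Delta_k=\{x\in\mathbb R^k:x\ge0,\sum_ix_i=1\}$, $e_1,\dots,e_k$ the standard basis of $\mathbb R^k$. For $\psi\in\mathbb R^k$, $g_\psi(x):=e_{i^*}$ where $i^*$ is the smallest index minimizing $\|x-e_i\|_1-\psi_i$ over $i\in[k]$; $\mathcal G_k:=\{g_\psi:\psi\in\mathbb R^k\}$. A finite set $C\subseteq\Delta_k$ is N-shattered by a class $\mathcal H$ if there exist $f_0,f_1:C\to\{e_1,\dots,e_k\}$ with $f_0(x)\ne f_1(x)$ for all $x\in C$ such that for every $B\subseteq C$ there is $h\in\mathcal H$ with $h(x)=f_0(x)$ for $x\in B$ and $h(x)=f_1(x)$ for $x\in C\setminus B$. The Natarajan dimension $d_N(\mathcal H)$ is the largest cardinality of an N-shattered set. *)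

(* Defs.v *)
From HB Require Import structures.
From mathcomp Require Import all_boot all_order all_algebra.
From mathcomp Require Import reals.
Set Implicit Arguments. Unset Strict Implicit. Unset Printing Implicit Defensive.
Import Order.TTheory GRing.Theory Num.Theory.
Local Open Scope ring_scope.

Section Defs.
Variables (R : realType) (k : nat).

Definition in_simplex (x : 'rV[R]_k) : Prop :=
  (forall i, 0 <= x ord0 i) /\ \sum_(i < k) x ord0 i = 1.

Definition l1_dist_basis (x : 'rV[R]_k) (i : 'I_k) : R :=
  \sum_(j < k) `|x ord0 j - (j == i)%:R|.

Definition gscore (psi : 'I_k -> R) (x : 'rV[R]_k) (i : 'I_k) : R :=
  l1_dist_basis x i - psi i.

Definition is_g_value (psi : 'I_k -> R) (x : 'rV[R]_k) (i : 'I_k) : Prop :=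
  (forall j, gscore psi x i <= gscore psi x j) /\
  (forall j : 'I_k, (j < i)%N -> gscore psi x i < gscore psi x j).

(* The class G_k of functions Delta_k -> [k] (label e_i identified with i);
   a function is only constrained on Delta_k. *)
Definition G_class : ('rV[R]_k -> 'I_k) -> Prop :=
  fun h => exists psi : 'I_k -> R,
    forall x, in_simplex x -> is_g_value psi x (h x).

Definition N_shattered (H : ('rV[R]_k -> 'I_k) -> Prop) (C : seq 'rV[R]_k) : Prop :=
  uniq C /\ (forall x, x \in C -> in_simplex x) /\
  exists f0 f1 : 'rV[R]_k -> 'I_k,
    (forall x, x \in C -> f0 x != f1 x) /\
    forall B : pred 'rV[R]_k,
      exists h, H h /\
        forall x, x \in C -> h x = (if B x then f0 x else f1 x).

Definition natarajan_dim_eq (H : ('rV[R]_k -> 'I_k) -> Prop) (d : nat) : Prop :=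
  (exists C, N_shattered H C /\ size C = d) /\
  (forall C, N_shattered H C -> (size C <= d)%N).

End Defs.

(* Main.v *)
Require Import Defs.
From HB Require Import structures.
From mathcomp Require Import all_boot all_order all_algebra.
From mathcomp Require Import reals.
From mathcomp Require Import ring lra zify.
Set Implicit Arguments. Unset Strict Implicit. Unset Printing Implicit Defensive.
Import Order.TTheory GRing.Theory Num.Theory.
Local Open Scope ring_scope.

Section Proofs.
Variables (R : realType) (k : nat).
Implicit Types (psi : 'I_k -> R) (x : 'rV[R]_k).

Lemma g_label_ge psi x (a c : 'I_k) :
  is_g_value psi x a ->
  l1_dist_basis x a - l1_dist_basis x c <= psi a - psi c /\
  ((c < a)%N -> l1_dist_basis x a - l1_dist_basis x c < psi a - psi c).
Proof.
move=> [H1 H2]; split.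
  by have := H1 c; rewrite /gscore; lra.
by move=> /H2; rewrite /gscore; lra.
Qed.

Lemma g_unique psi x i j : is_g_value psi x i -> is_g_value psi x j -> i = j.
Proof.
move=> [Hi1 Hi2] [Hj1 Hj2]; apply/val_inj/eqP; rewrite eqn_leq.
apply/andP; split; rewrite leqNgt; apply/negP => H.
- by have := Hi2 _ H; have := Hj1 i; lra.
- by have := Hj2 _ H; have := Hi1 j; lra.
Qed.

Lemma g_exists psi x (i0 : 'I_k) : exists i, is_g_value psi x i.
Proof.
pose F := gscore psi x.
pose im := [arg min_(i < i0) F i]%O.
have Him : forall j, F im <= F j.
  rewrite /im; case: (arg_minP F (P := predT) (erefl true)) => i _ Hi j.
  exact: Hi.
pose P := [pred i | [forall j, F i <= F j]].
have Pim : P im by apply/forallP.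
case: (arg_minnP val Pim) => i /forallP Pi Hmin.
exists i; split => // j ji.
rewrite lt_neqAle Pi andbT; apply/negP => /eqP E.
have Pj : P j by apply/forallP => l; rewrite /F -E; exact: Pi.
by have := Hmin _ Pj; rewrite leqNgt ji.
Qed.

Lemma sumM (f : 'I_k -> R) (a c : 'I_k) :
  \sum_i f i * ((i == a)%:R - (i == c)%:R) = f a - f c.
Proof.
under eq_bigr do rewrite mulrBr.
rewrite sumrB (bigD1 a) //= eqxx mulr1 big1 ?addr0; last first.
  by move=> i /negbTE ->; rewrite mulr0.
rewrite (bigD1 c) //= eqxx mulr1 big1 ?addr0 //.
by move=> i /negbTE ->; rewrite mulr0.
Qed.

Lemma sum_ind (a : 'I_k) : \sum_i ((i == a)%:R : R) = 1.
Proof.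
rewrite (bigD1 a) //= eqxx big1 ?addr0 //.
by move=> i /negbTE ->.
Qed.


Lemma final_contra psi1 psi2 x (a c : 'I_k) :
  a != c -> is_g_value psi1 x a -> is_g_value psi2 x c ->
  psi1 a - psi1 c = l1_dist_basis x a - l1_dist_basis x c ->
  psi2 a - psi2 c = l1_dist_basis x a - l1_dist_basis x c -> False.
Proof.
move=> ac H1 H2 E1 E2.
have [_ S1] := g_label_ge c H1.
have [_ S2] := g_label_ge a H2.
case: (ltngtP a c) => [lt|lt|eq].
- by have := S2 lt; lra.
- by have := S1 lt; lra.
- by move: ac; rewrite (val_inj eq) eqxx.
Qed.

Lemma nth_exists (C : seq 'rV[R]_k) (P : pred 'I_(size C)) (t : 'I_(size C)) :
  uniq C ->
  [exists t' : 'I_(size C), (nth (0 : 'rV[R]_k) C t' == nth (0 : 'rV[R]_k) C t) && P t'] = P t.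
Proof.
move=> uC; apply/existsP/idP => [[t' /andP[E Pt]]|Pt]; last first.
  by exists t; rewrite eqxx.
move: E; rewrite nth_uniq // => /eqP/val_inj <-; done.
Qed.

Lemma upper (C : seq 'rV[R]_k) : (0 < k)%N ->
  N_shattered (@G_class R k) C -> (size C <= k.-1)%N.
Proof.
move=> k0 [uC [Csimp [f0 [f1 [f01 Hsh]]]]].
rewrite leqNgt; apply/negP => Hm.
have km : (k <= size C)%N by apply: (leq_trans _ Hm); rewrite prednK.
set m := size C in km Hm *.
pose xt (t : 'I_m) := nth (0 : 'rV[R]_k) C t.
have xtC t : xt t \in C by rewrite mem_nth.
pose M : 'M[R]_(k, m) :=
  \matrix_(i, t) ((i == f0 (xt t))%:R - (i == f1 (xt t))%:R).
have rM : (\rank M < k)%N.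
  have u0 : (const_mx 1 : 'rV[R]_k) *m M = 0.
    apply/rowP => t; rewrite !mxE.
    under eq_bigr do rewrite !mxE mul1r.
    by rewrite sumrB !sum_ind subrr.
  have : (const_mx 1 : 'rV[R]_k) != 0.
    apply/eqP => /rowP /(_ (Ordinal k0)); rewrite !mxE => /eqP.
    by rewrite oner_eq0.
  move=> unz; have := mxrankS (introT sub_kermxP u0).
  by rewrite mxrank_ker rank_rV unz subn_gt0.
pose K := kermx M^T.
have K0 : K != 0.
  rewrite -mxrank_eq0 /K mxrank_ker mxrank_tr -lt0n subn_gt0.
  exact: leq_trans rM km.
have [r wr] : exists r, row r K != 0.
  apply/existsP; apply: contraR K0 => /existsPn H.
  by apply/eqP/row_matrixP => r; rewrite row0; apply/eqP/negbNE/H.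
set w := row r K in wr.
have wM : w *m M^T = 0 by apply/sub_kermxP; exact: row_sub.
clearbody w.
pose wt (t : 'I_m) := w ord0 t.
pose a t := f0 (xt t).
pose c t := f1 (xt t).
pose d t := l1_dist_basis (xt t) (a t) - l1_dist_basis (xt t) (c t).
have sum0 : forall psi : 'I_k -> R, \sum_t wt t * (psi (a t) - psi (c t)) = 0.
  move=> psi.
  transitivity (\sum_t wt t * \sum_i psi i * M i t).
    by apply: eq_bigr => t _; rewrite -sumM; congr (_ * _); apply: eq_bigr => i _; rewrite mxE.
  under eq_bigr do rewrite mulr_sumr.
  rewrite exchange_big /= big1 // => i _.
  transitivity (psi i * (w *m M^T) ord0 i).
    rewrite mxE mulr_sumr; apply: eq_bigr => t _; rewrite !mxE /wt; ring.
  by rewrite wM mxE mulr0.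
have [t0 wt0] : exists t0, wt t0 != 0.
  apply/existsP; apply: contraR wr => /existsPn H.
  by apply/eqP/rowP => t; rewrite mxE; apply/eqP/negbNE/H.
have [h1 [[psi1 Hpsi1] Hh1]] := Hsh [pred x | [exists t : 'I_m, (nth (0 : 'rV[R]_k) C t == x) && (0 < wt t)]].
have [h2 [[psi2 Hpsi2] Hh2]] := Hsh [pred x | [exists t : 'I_m, (nth (0 : 'rV[R]_k) C t == x) && (wt t < 0)]].
have G1 t : is_g_value psi1 (xt t) (if 0 < wt t then a t else c t).
  rewrite /a /c -(nth_exists (fun t => 0 < wt t) t uC) -/(xt t).
  have := Hh1 _ (xtC t); rewrite /= => <-; exact: Hpsi1 (Csimp _ (xtC t)).
have G2 t : is_g_value psi2 (xt t) (if wt t < 0 then a t else c t).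
  rewrite /a /c -(nth_exists (fun t => wt t < 0) t uC) -/(xt t).
  have := Hh2 _ (xtC t); rewrite /= => <-; exact: Hpsi2 (Csimp _ (xtC t)).
have I1 t : 0 <= wt t * (psi1 (a t) - psi1 (c t)) - wt t * d t.
  have := G1 t; case: ifP => wp G.
    have [L _] := g_label_ge (c t) G; rewrite /d; nra.
  have [L _] := g_label_ge (a t) G; move/negbT: wp; rewrite -leNgt /d => wp; nra.
have I2 t : 0 <= wt t * d t - wt t * (psi2 (a t) - psi2 (c t)).
  have := G2 t; case: ifP => wp G.
    have [L _] := g_label_ge (c t) G; rewrite /d; nra.
  have [L _] := g_label_ge (a t) G; move/negbT: wp; rewrite -leNgt /d => wp; nra.
have S1 : 0 <= \sum_t (wt t * (psi1 (a t) - psi1 (c t)) - wt t * d t).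
  by apply: sumr_ge0 => t _; exact: I1.
have S2 : 0 <= \sum_t (wt t * d t - wt t * (psi2 (a t) - psi2 (c t))).
  by apply: sumr_ge0 => t _; exact: I2.
rewrite sumrB sum0 in S1; rewrite sumrB sum0 in S2.
have Z1 : \sum_t (wt t * (psi1 (a t) - psi1 (c t)) - wt t * d t) = 0.
  by rewrite sumrB sum0; lra.
have Z2 : \sum_t (wt t * d t - wt t * (psi2 (a t) - psi2 (c t))) = 0.
  by rewrite sumrB sum0; lra.
have E1 := @psumr_eq0P _ _ _ _ (fun t _ => I1 t) Z1 t0 isT.
have E2 := @psumr_eq0P _ _ _ _ (fun t _ => I2 t) Z2 t0 isT.
have E1' : psi1 (a t0) - psi1 (c t0) = d t0.
  by apply/eqP; rewrite -subr_eq0; move: E1; rewrite -mulrBr => /eqP; rewrite mulf_eq0 (negbTE wt0).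
have E2' : psi2 (a t0) - psi2 (c t0) = d t0.
  by apply/eqP; rewrite -subr_eq0 -oppr_eq0 opprB; move: E2; rewrite -mulrBr => /eqP; rewrite mulf_eq0 (negbTE wt0).
have ac : a t0 != c t0 by apply: f01.
have := G1 t0; have := G2 t0.
case: (ltrgt0P (wt t0)) wt0 => // wp _ Ga Gb.
- exact: (final_contra ac Gb Ga E1' E2').
- exact: (final_contra ac Ga Gb E2' E1').
Qed.


Lemma l1_simplex x i : in_simplex x -> l1_dist_basis x i = 2 - 2 * x ord0 i.
Proof.
move=> [x0 x1]; rewrite /l1_dist_basis (bigD1 i) //= eqxx.
move: x1; rewrite (bigD1 i) //= => x1.
have -> : \sum_(j < k | j != i) `|x ord0 j - (j == i)%:R| = \sum_(j < k | j != i) x ord0 j.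
  by apply: eq_bigr => j /negbTE ->; rewrite subr0 ger0_norm.
have s0 : 0 <= \sum_(j < k | j != i) x ord0 j by apply: sumr_ge0.
rewrite ler0_norm; first lra.
lra.
Qed.

Definition gvb psi x i : bool :=
  [forall j, gscore psi x i <= gscore psi x j] &&
  [forall j : 'I_k, (j < i)%N ==> (gscore psi x i < gscore psi x j)].

Lemma G_class_mem psi (i0 : 'I_k) :
  forall x, in_simplex x -> is_g_value psi x (odflt i0 [pick i | gvb psi x i]).
Proof.
move=> x _; case: pickP => [i /andP[/forallP H1 /forallP H2] | H] /=.
  by split => // j ji; exact: (implyP (H2 j) ji).
have [i [H1 H2]] := g_exists psi x i0.
have := H i; rewrite /gvb.
have -> : [forall j, gscore psi x i <= gscore psi x j] by apply/forallP.
suff -> : [forall j : 'I_k, (j < i)%N ==> (gscore psi x i < gscore psi x j)] by [].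
by apply/forallP => j; apply/implyP; exact: H2.
Qed.

End Proofs.

Section Lower.
Variables (R : realType) (n : nat).
Local Notation k := n.+2.

Definition pt (t : 'I_k) : 'rV[R]_k := \row_j (((j == ord0)%:R + (j == t)%:R) / 2).
Definition fl (x : 'rV[R]_k) : 'I_k := odflt ord0 [pick t | (t != ord0) && (x ord0 t == 1/2)].

Lemma pt_simplex t : in_simplex (pt t).
Proof.
split => [i|]; first by rewrite mxE; apply: divr_ge0 => //; apply: addr_ge0.
under eq_bigr do rewrite mxE.
rewrite -mulr_suml big_split /= !sum_ind; lra.
Qed.

Lemma fl_pt t : t != ord0 -> fl (pt t) = t.
Proof.
move=> t0; rewrite /fl; case: pickP => [t' /andP[t'0 /eqP] | H] /=.
  rewrite mxE (negbTE t'0); case: eqP => [//|_] /= E; exfalso; move: E; rewrite add0r mul0r; lra.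
have := H t; rewrite t0 mxE (negbTE t0) eqxx /=.
suff -> : ((0 : R) + 1) / 2 == 1 / 2 by [].
by rewrite add0r.
Qed.

Lemma gscore_pt psi t j : gscore psi (pt t) j = 2 - ((j == ord0)%:R + (j == t)%:R) - psi j.
Proof. rewrite /gscore l1_simplex; last exact: pt_simplex. rewrite /pt mxE; lra. Qed.

Lemma lower : exists C, N_shattered (@G_class R k) C /\ size C = k.-1.
Proof.
pose ts := enum [pred t : 'I_k | t != ord0].
have tsP t : (t \in ts) = (t != ord0) by rewrite mem_enum.
exists (map pt ts); split; last first.
  by rewrite size_map -cardE cardC1 card_ord.
have inj : {in ts &, injective pt}.
  move=> t t' ht ht' E; rewrite tsP in ht; rewrite tsP in ht'.
  by rewrite -(fl_pt ht) E fl_pt.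
split; first by rewrite (map_inj_in_uniq inj) enum_uniq.
split; first by move=> x /mapP [t _ ->]; exact: pt_simplex.
exists (fun _ => ord0), fl; split.
  by move=> x /mapP [t ht ->]; rewrite fl_pt -?tsP // eq_sym -tsP.
move=> B.
pose psi (j : 'I_k) : R := if j == ord0 then 0 else if B (pt j) then -1/2 else 1/2.
have psib j : -1/2 <= psi j <= 1/2 by rewrite /psi; case: ifP => _; [|case: ifP => _]; apply/andP; split; lra.
exists (fun x => odflt ord0 [pick i | gvb psi x i]); split.
  by exists psi; apply: G_class_mem.
move=> x /mapP [t ht ->]; rewrite tsP in ht.
apply: (g_unique (G_class_mem psi ord0 (pt_simplex t))).
rewrite fl_pt //.
have [/andP[pl pu]] := (psib t, psib).
case Bt: (B (pt t)).
  have pt' : psi t = -1/2 by rewrite /psi (negbTE ht) Bt.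
  split => [j|j]; last by rewrite ltn0.
  have p0 : psi ord0 = 0 by rewrite /psi eqxx.
  rewrite !gscore_pt eqxx [ord0 == t]eq_sym (negbTE ht) p0.
  case: (eqVneq j ord0) => [->|j0]; first by rewrite ?eqxx [ord0 == t]eq_sym (negbTE ht).
  have /andP[ql qu] := psib j.
  case: (eqVneq j t) => [E|jt]; first by rewrite E ?eqxx ?(negbTE ht) pt' /=; lra.
  rewrite ?(negbTE j0) ?(negbTE jt) /=; lra.
have pt' : psi t = 1/2 by rewrite /psi (negbTE ht) Bt.
suff S : forall j, j != t -> gscore psi (pt t) t < gscore psi (pt t) j.
  split => j.
    by case: (eqVneq j t) => [->//|/S /ltW].
  by move=> jt; apply: S; rewrite neq_ltn jt.
move=> j jt; rewrite !gscore_pt eqxx (negbTE ht) pt' (negbTE jt).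
case: (eqVneq j ord0) => [->|j0]; first by rewrite /psi eqxx; lra.
have /andP[ql qu] := psib j; rewrite ?(negbTE j0) /=; lra.
Qed.

End Lower.

Theorem theoremD6 (R : realType) (k : nat) (hk : (2 <= k)%N) :
  natarajan_dim_eq (@G_class R k) k.-1.
Proof.
case: k hk => [|[|n]] // _; split; first exact: lower.
by move=> C; apply: upper.
Qed.
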